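(* Let $P$ be a finite poset, $\mathbb K$ a field, $R=\mathbb K[\mathcal C(P)]$ and $\omega$ the canonical ideal of $R$. Then for every positive integer $n$, $$\omega^{(n)}=\omega^{n}=\bigoplus_{\xi\in S^{(n)}}\mathbb K\,T^\xi\qquad\text{and}\qquad \omega^{(-n)}=(\omega^{(-1)})^n=\bigoplus_{\xi\in S^{(-n)}}\mathbb K\,T^\xi .$$
   Context: $P^-=P\cup\{-\infty\}$ with $-\infty<z$ for all $z\in P$. For a function $\xi$ and a finite set $B$ in its domain, $\xi^+(B)=\sum_{b\in B}\xi(b)$. The chain polytope is $\mathcal C(P)=\{f\in\mathbb R^P: f(x)\ge 0\ \forall x,\ f^+(C)\le 1$ for every chain $C$ of $P\}$. Let $T_x$ ($x\in P^-$) be indeterminates; for $f\in\mathbb Z^{P^-}$ put $T^f=\prod_{x\in P^-}T_x^{f(x)}$, graded by $\deg T^f=f(-\infty)$. For $n\in\mathbb Z$ let $S^{(n)}=\{\xi\in\mathbb Z^{P^-}: \xi(x)\ge n$ for all $x\in P$, and $\xi(-\infty)\ge \xi^+(C)+n$ for every maximal chain $C$ of $P\}$. The Ehrhart ring is $\mathbb K[\mathcal C(P)]=\bigoplus_{\xi\in S^{(0)}}\mathbb K T^\xi$ (the subring of $\mathbb K[T_x^{\pm1}:x\in P][T_{-\infty}]$ generated by $T^f$ with $f(-\infty)>0$, $f|_P/f(-\infty)\in\mathcal C(P)$), and its canonical ideal is $\omega=\bigoplus_{\xi\in S^{(1)}}\mathbb K T^\xi$ (monomials with $f|_P/f(-\infty)$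 in the relative interior of $\mathcal C(P)$). For $n\in\mathbb Z$, $\omega^{(n)}$ denotes the $n$-th power of $\omega$ in the group of divisorial fractional ideals of $R$, with product $I\cdot J=R:_{Q(R)}(R:_{Q(R)}IJ)$; for $n>0$ it is the $n$-th symbolic power, and $\omega^{(-1)}=R:_{Q(R)}\omega$ is the anticanonical ideal. *)

(* Defs.v *)
From HB Require Import structures.
From mathcomp Require Import all_boot all_order all_algebra.
Set Implicit Arguments. Unset Strict Implicit. Unset Printing Implicit Defensive.
Import Order.TTheory GRing.Theory Num.Theory.
Local Open Scope ring_scope.

Section Defs.
Context {disp : Order.disp_t} (P : finPOrderType disp) (K : fieldType).

(* P^- = option P, with None playing the role of -infinity. *)
Definition expo := {ffun option P -> int}.
Definition expo_add (e f : expo) : expo := [ffun x => e x + f x].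
Definition expo0 : expo := [ffun _ => 0].

Definition is_chain (C : {set P}) : bool :=
  [forall x in C, forall y in C, (x >=< y)%O].
Definition is_max_chain (C : {set P}) : bool :=
  is_chain C && [forall D : {set P}, (is_chain D && (C \subset D)) ==> (D == C)].

Definition S (n : int) : pred expo := fun xi =>
  [forall x : P, n <= xi (Some x)] &&
  [forall C : {set P}, is_max_chain C ==>
       (\sum_(x in C) xi (Some x) + n <= xi None)].

(* Laurent polynomials K[T_x^{+-1} : x in P^-], as finite formal sums
   of terms c T^e; two representations denote the same element iff
   their coefficient functions agree. *)
Definition laurent := seq (expo * K).
Definition coef (s : laurent) (e : expo) : K := \sum_(p <- s | p.1 == e) p.2.
Definition lpeq (s t : laurent) := forall e, coef s e = coef t e.
Definition lpzero (s : laurent) := forall e, coef s e = 0.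
Definition lpadd (s t : laurent) : laurent := s ++ t.
Definition lpmul (s t : laurent) : laurent :=
  [seq (expo_add p.1 q.1, p.2 * q.2) | p <- s, q <- t].
Definition lpone : laurent := [:: (expo0, 1)].
Definition supported_in (A : pred expo) (s : laurent) :=
  forall e, coef s e != 0 -> A e.
(* membership in R = K[C(P)] = span of T^xi, xi in S^(0) *)
Definition inRpoly (s : laurent) := supported_in (S 0) s.

(* Q(R): fractions a/b with a, b in R, b <> 0 *)
Definition frac := (laurent * laurent)%type.
Definition fvalid (q : frac) := inRpoly q.1 /\ inRpoly q.2 /\ ~ lpzero q.2.
Definition fequiv (q r : frac) := lpeq (lpmul q.1 r.2) (lpmul r.1 q.2).
Definition fmul (q r : frac) : frac := (lpmul q.1 r.1, lpmul q.2 r.2).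
Definition fadd (q r : frac) : frac :=
  (lpadd (lpmul q.1 r.2) (lpmul r.1 q.2), lpmul q.2 r.2).
Definition fzero : frac := ([::], lpone).
Definition frac_inR (q : frac) := exists r, inRpoly r /\ lpeq q.1 (lpmul r q.2).

Definition fracideal := frac -> Prop.
Definition fieq (I J : fracideal) := forall q, I q <-> J q.

Definition monspan (A : pred expo) : fracideal := fun q =>
  fvalid q /\ exists c, supported_in A c /\ lpeq q.1 (lpmul c q.2).

Definition Rideal : fracideal := monspan (S 0).
Definition omega : fracideal := monspan (S 1).

Definition colon (I : fracideal) : fracideal := fun q =>
  fvalid q /\ forall i, I i -> frac_inR (fmul q i).

Definition prodI (I J : fracideal) : fracideal := fun q =>
  fvalid q /\ exists s : seq (frac * frac),
    (forall p, p \in s -> I p.1 /\ J p.2) /\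
    fequiv q (foldr fadd fzero [seq fmul p.1 p.2 | p <- s]).

(* product in the group of divisorial fractional ideals *)
Definition dprod (I J : fracideal) : fracideal := colon (colon (prodI I J)).

Fixpoint gpow (I : fracideal) (n : nat) : fracideal :=
  match n with 0 => Rideal | k.+1 => dprod I (gpow I k) end.
Fixpoint opow (I : fracideal) (n : nat) : fracideal :=
  match n with 0 => Rideal | k.+1 => prodI I (opow I k) end.

End Defs.

(* Main.v *)
Require Import Defs.
From HB Require Import structures.
From mathcomp Require Import all_boot all_order all_algebra.
From mathcomp Require Import zify.
From Stdlib Require Import Setoid Morphisms Classical.
Import Order.TTheory GRing.Theory Num.Theory.
Set Implicit Arguments. Unset Strict Implicit. Unset Printing Implicit Defensive.
Local Open Scope ring_scope.



Section Laurent.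
Context {disp : Order.disp_t} {P : finPOrderType disp} {K : fieldType}.
Local Notation expo := (expo P).
Local Notation laurent := (laurent P K).
Implicit Types s t u : laurent.

Lemma coef_cat s t e : coef (s ++ t) e = coef s e + coef t e.
Proof. by rewrite /coef big_cat. Qed.

Lemma coef_nil e : coef ([::] : laurent) e = 0.
Proof. by rewrite /coef big_nil. Qed.

Lemma coef_cons p s e :
  coef (p :: s) e = (if p.1 == e then p.2 else 0) + coef s e.
Proof. by rewrite /coef big_cons; case: ifP; rewrite ?add0r. Qed.

Lemma coef_mon (a e : expo) (k : K) :
  coef [:: (a, k)] e = if a == e then k else 0.
Proof. by rewrite coef_cons coef_nil addr0. Qed.

Lemma coef_lpmul2 s t e : coef (lpmul s t) e =
  \sum_(p <- s) \sum_(q <- t) (if p.1 + q.1 == e then p.2 * q.2 else 0).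
Proof. by rewrite /coef /lpmul big_mkcond big_allpairs_dep. Qed.

Lemma expo_addE (a b : expo) : expo_add a b = a + b. Proof. by []. Qed.

Lemma addr_eq_sub (a b e : expo) : (a + b == e) = (b == e - a).
Proof. by rewrite [in RHS]eq_sym subr_eq eq_sym [b + a]addrC. Qed.

Lemma coef_lpmul s t e : coef (lpmul s t) e =
  \sum_(p <- s) coef t (e - p.1) * p.2.
Proof.
rewrite coef_lpmul2; apply: eq_bigr => p _.
rewrite /coef mulr_suml [RHS]big_mkcond /=; apply: eq_bigr => q _.
by rewrite addr_eq_sub; case: ifP; rewrite ?mul0r // mulrC.
Qed.

Lemma coef_notin s e : e \notin unzip1 s -> coef s e = 0.
Proof.
elim: s => [|p s IH] /=; first by rewrite coef_nil.
rewrite in_cons negb_or => /andP[ne nin]; rewrite coef_cons IH //.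
by rewrite eq_sym (negbTE ne) add0r.
Qed.

Lemma coef_nz_in s e : coef s e != 0 -> e \in unzip1 s.
Proof. by apply: contraR => /coef_notin ->. Qed.

Lemma group_sum (F : expo -> K) s (E : seq expo) :
  uniq E -> {subset unzip1 s <= E} ->
  \sum_(p <- s) F p.1 * p.2 = \sum_(x <- E) F x * coef s x.
Proof.
move=> uE; elim: s => [|p s IH] sub.
  by rewrite big_nil big1 // => x _; rewrite coef_nil mulr0.
rewrite big_cons IH; last by move=> x xs; apply: sub; rewrite /= in_cons xs orbT.
have pE : p.1 \in E by apply: sub; rewrite /= in_cons eqxx.
under [in RHS]eq_bigr => x _ do rewrite coef_cons mulrDr.
rewrite big_split /=; congr (_ + _).
rewrite (bigD1_seq p.1) //= eqxx big1 ?addr0 // => x; rewrite eq_sym => /negbTE ->.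
by rewrite mulr0.
Qed.

Definition lpeqE s t : lpeq s t <-> (forall e, coef s e = coef t e) := conj id id.

Lemma lpeq_refl s : lpeq s s. Proof. by []. Qed.
Lemma lpeq_sym s t : lpeq s t -> lpeq t s. Proof. by move=> h e; rewrite h. Qed.
Lemma lpeq_trans s t u : lpeq s t -> lpeq t u -> lpeq s u.
Proof. by move=> h1 h2 e; rewrite h1 h2. Qed.

Lemma lpeq_mulr s t t' : lpeq t t' -> lpeq (lpmul s t) (lpmul s t').
Proof. by move=> h e; rewrite !coef_lpmul; apply: eq_bigr => p _; rewrite h. Qed.

Lemma lpeq_mull s s' t : lpeq s s' -> lpeq (lpmul s t) (lpmul s' t).
Proof.
move=> h e; rewrite !coef_lpmul.
have uE : uniq (undup (unzip1 s ++ unzip1 s')) by apply: undup_uniq.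
rewrite (group_sum (fun x => coef t (e - x)) uE); last first.
  by move=> x xs; rewrite mem_undup mem_cat xs.
rewrite (group_sum (fun x => coef t (e - x)) uE); last first.
  by move=> x xs; rewrite mem_undup mem_cat xs orbT.
by apply: eq_bigr => x _; rewrite h.
Qed.

Lemma lpeq_mul s s' t t' : lpeq s s' -> lpeq t t' ->
  lpeq (lpmul s t) (lpmul s' t').
Proof.
move=> h1 h2; apply: lpeq_trans (lpeq_mull _ h1) _; exact: lpeq_mulr.
Qed.

Lemma lpeq_add s s' t t' : lpeq s s' -> lpeq t t' ->
  lpeq (lpadd s t) (lpadd s' t').
Proof. by move=> h1 h2 e; rewrite /lpadd !coef_cat h1 h2. Qed.

Lemma lpmulC s t : lpeq (lpmul s t) (lpmul t s).
Proof.
move=> e; rewrite !coef_lpmul2 exchange_big /=.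
by apply: eq_bigr => q _; apply: eq_bigr => p _; rewrite addrC mulrC.
Qed.

Lemma lpmulA s t u : lpeq (lpmul s (lpmul t u)) (lpmul (lpmul s t) u).
Proof.
move=> e; rewrite !coef_lpmul2.
rewrite [in RHS]/lpmul big_allpairs_dep /=.
apply: eq_bigr => p _; rewrite /lpmul big_allpairs_dep /=.
apply: eq_bigr => q _ /=.
apply: eq_bigr => r _ /=; rewrite !expo_addE addrA mulrA.
by case: ifP; rewrite ?mulr0.
Qed.

Lemma lpmulDl s t u : lpmul (lpadd s t) u = lpadd (lpmul s u) (lpmul t u).
Proof. by rewrite /lpmul /lpadd allpairs_cat. Qed.

Lemma lpmulDr s t u : lpeq (lpmul s (lpadd t u)) (lpadd (lpmul s t) (lpmul s u)).
Proof.
apply: lpeq_trans (lpmulC _ _) _; rewrite lpmulDl.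
by apply: lpeq_add; apply: lpmulC.
Qed.

Lemma lpmul_mon (a b : expo) (k l : K) :
  lpmul [:: (a, k)] [:: (b, l)] = [:: (a + b, k * l)].
Proof. by []. Qed.

Lemma lpmul_shift s (u : expo) e : coef (lpmul s [:: (u, 1)]) e = coef s (e - u).
Proof.
rewrite coef_lpmul [RHS]/coef [RHS]big_mkcond /=; apply: eq_bigr => p _.
rewrite coef_mon -addr_eq_sub addrC -addr_eq_sub.
by case: ifP; rewrite ?mul1r ?mul0r.
Qed.

Lemma lpmul_one s : lpeq (lpmul s (lpone P K)) s.
Proof.
move=> e; rewrite /lpone lpmul_shift; congr coef.
by apply/ffunP=> x; rewrite !ffunE /= subr0.
Qed.


Definition key (e : expo) : seqlexi int := [seq e i | i <- enum {: option P}].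

Lemma key_inj : injective key.
Proof.
move=> e f /eq_in_map h; apply/ffunP => i; apply: h; by rewrite mem_enum.
Qed.

Lemma ltxi_add (l : seq (option P)) (x e y : expo) :
  ([seq x i | i <- l] < [seq e i | i <- l] :> seqlexi int)%O ->
  ([seq x i + y i | i <- l] < [seq e i + y i | i <- l] :> seqlexi int)%O.
Proof.
elim: l => [|i l IH] //=; rewrite !ltxi_cons !lerD2r.
case/andP => h1 h2; rewrite h1 /=.
by move: h2; case: (e i <= x i)%O => //= /IH.
Qed.

Lemma key_add (x y : expo) : key (x + y) = [seq x i + y i | i <- enum {: option P}].
Proof. by apply: eq_map => i; rewrite ffunE. Qed.

Lemma key_lt_add (x e y : expo) : (key x < key e)%O -> (key (x + y) < key (e + y))%O.
Proof. by rewrite !key_add; apply: ltxi_add. Qed.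

Lemma key_le_add (x e y : expo) : (key x <= key e)%O -> (key (x + y) <= key (e + y))%O.
Proof.
rewrite le_eqVlt => /orP[/eqP/key_inj -> //|/key_lt_add h].
exact: ltW (h y).
Qed.

Lemma exists_max (l : seq expo) x0 : x0 \in l ->
  exists2 m, m \in l & forall x, x \in l -> (key x <= key m)%O.
Proof.
elim: l x0 => [|a l IH] x0 //= _.
case: l IH => [|b l'] IH.
  by exists a; rewrite ?mem_head // => x; rewrite inE => /eqP ->.
have [m ml hm] := IH b (mem_head _ _).
case: (leP (key a) (key m)) => h.
  exists m; first by rewrite in_cons ml orbT.
  by move=> x; rewrite in_cons => /orP[/eqP ->|/hm].
exists a; first by rewrite mem_head.
move=> x; rewrite in_cons => /orP[/eqP -> //|/hm hx].
exact: le_trans hx (ltW h).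
Qed.

Lemma group_sum2 (F : expo -> expo -> K) s t (Es Et : seq expo) :
  uniq Es -> {subset unzip1 s <= Es} -> uniq Et -> {subset unzip1 t <= Et} ->
  \sum_(p <- s) \sum_(q <- t) F p.1 q.1 * (p.2 * q.2) =
  \sum_(x <- Es) \sum_(y <- Et) F x y * (coef s x * coef t y).
Proof.
move=> uS sS uT sT.
transitivity (\sum_(p <- s) \sum_(y <- Et) (F p.1 y * coef t y) * p.2).
  apply: eq_bigr => p _.
  under eq_bigr => q _ do rewrite mulrA.
  rewrite (group_sum (fun y => F p.1 y * p.2) uT sT).
  by apply: eq_bigr => y _; rewrite mulrAC.
rewrite exchange_big /=.
under eq_bigr => y _ do rewrite (group_sum (fun x => F x y * coef t y) uS sS).
rewrite exchange_big /=; apply: eq_bigr => x _; apply: eq_bigr => y _.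
by rewrite mulrAC mulrA.
Qed.

Lemma lpmul_nz s t : ~ lpzero s -> ~ lpzero t -> ~ lpzero (lpmul s t).
Proof.
move=> /not_all_ex_not [e0 He0] /not_all_ex_not [f0 Hf0].
have He0' : coef s e0 != 0 by apply/eqP.
have Hf0' : coef t f0 != 0 by apply/eqP.
pose Es := undup (unzip1 s); pose Et := undup (unzip1 t).
have uS : uniq Es by apply: undup_uniq.
have uT : uniq Et by apply: undup_uniq.
have sS : {subset unzip1 s <= Es} by move=> x; rewrite mem_undup.
have sT : {subset unzip1 t <= Et} by move=> x; rewrite mem_undup.
have i0 : e0 \in [seq x <- Es | coef s x != 0].
  by rewrite mem_filter He0' mem_undup coef_nz_in.
have j0 : f0 \in [seq x <- Et | coef t x != 0].
  by rewrite mem_filter Hf0' mem_undup coef_nz_in.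
have [m1 m1in hm1] := exists_max i0.
have [m2 m2in hm2] := exists_max j0.
move: m1in m2in; rewrite !mem_filter => /andP[c1 i1] /andP[c2 i2].
move=> hz; move: (hz (m1 + m2)); apply/eqP.
rewrite coef_lpmul2.
have -> : \sum_(p <- s) \sum_(q <- t) (if p.1 + q.1 == m1 + m2 then p.2 * q.2 else 0)
   = \sum_(p <- s) \sum_(q <- t) (if p.1 + q.1 == m1 + m2 then 1 else 0) * (p.2 * q.2).
  by apply: eq_bigr => p _; apply: eq_bigr => q _; case: ifP; rewrite ?mul1r ?mul0r.
rewrite (group_sum2 (fun x y => if x + y == m1 + m2 then 1 else 0) uS sS uT sT).
rewrite (bigD1_seq m1) //= (bigD1_seq m2) //= eqxx mul1r.
rewrite big1 ?addr0; last first.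
  move=> y ny; case: (coef t y =P 0) => [->|/eqP cy]; first by rewrite !mulr0.
  have yin : y \in [seq x <- Et | coef t x != 0].
    by rewrite mem_filter cy mem_undup coef_nz_in.
  have hy : (key y < key m2)%O.
    by rewrite lt_neqAle hm2 // andbT; apply: contra ny => /eqP/key_inj ->.
  case: ifP => [/eqP e|]; last by rewrite mul0r.
  move: (key_lt_add m1 hy); rewrite ![_ + m1]addrC e ltxx //.
rewrite big1 ?addr0; first by rewrite mulf_neq0.
move=> x nx; rewrite big1 // => y _.
case: (coef s x =P 0) => [->|/eqP cx]; first by rewrite mul0r mulr0.
case: (coef t y =P 0) => [->|/eqP cy]; first by rewrite !mulr0.
have xin : x \in [seq z <- Es | coef s z != 0].
  by rewrite mem_filter cx mem_undup coef_nz_in.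
have yin : y \in [seq z <- Et | coef t z != 0].
  by rewrite mem_filter cy mem_undup coef_nz_in.
have hx : (key x < key m1)%O.
  by rewrite lt_neqAle hm1 // andbT; apply: contra nx => /eqP/key_inj ->.
case: ifP => [/eqP e|]; last by rewrite mul0r.
have h1 := key_lt_add y hx.
have h2 := key_le_add m1 (hm2 _ yin).
rewrite ![_ + m1]addrC in h2.
by move: (lt_le_trans h1 h2); rewrite e ltxx.
Qed.

Definition lpneg s : laurent := [seq (p.1, - p.2) | p <- s].

Lemma coef_lpneg s e : coef (lpneg s) e = - coef s e.
Proof. by rewrite /coef big_map sumrN. Qed.

Lemma lpmul_neg s t : lpeq (lpmul (lpneg s) t) (lpneg (lpmul s t)).
Proof.
move=> e; rewrite coef_lpneg !coef_lpmul big_map -sumrN.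
by apply: eq_bigr => p _ /=; rewrite mulrN.
Qed.

Lemma lpcancel s s' t : ~ lpzero t -> lpeq (lpmul s t) (lpmul s' t) -> lpeq s s'.
Proof.
move=> nt h; apply: NNPP => ne.
have nz : ~ lpzero (lpadd s (lpneg s')).
  move=> z; apply: ne => e; move: (z e); rewrite /lpadd coef_cat coef_lpneg.
  by move/eqP; rewrite subr_eq0 => /eqP.
apply: (lpmul_nz nz nt) => e.
rewrite lpmulDl /lpadd coef_cat lpmul_neg coef_lpneg h.
by rewrite subrr.
Qed.

End Laurent.



Section Frac.
Context {disp : Order.disp_t} {P : finPOrderType disp} {K : fieldType}.
Local Notation expo := (expo P).
Local Notation laurent := (laurent P K).
Local Notation frac := (Defs.frac P K).
Implicit Types s t u : laurent.

Add Parametric Relation : laurent (@lpeq disp P K)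
  reflexivity proved by (@lpeq_refl disp P K)
  symmetry proved by (@lpeq_sym disp P K)
  transitivity proved by (@lpeq_trans disp P K) as lpeq_rel.
Add Parametric Morphism : (@lpmul disp P K) with signature
  (@lpeq disp P K) ==> (@lpeq disp P K) ==> (@lpeq disp P K) as lpmul_mor.
Proof. move=> s s' h t t' h'; exact: lpeq_mul. Qed.
Add Parametric Morphism : (@lpadd disp P K) with signature
  (@lpeq disp P K) ==> (@lpeq disp P K) ==> (@lpeq disp P K) as lpadd_mor.
Proof. move=> s s' h t t' h'; exact: lpeq_add. Qed.

Local Infix "=~" := lpeq (at level 70).
Local Infix "**" := lpmul (at level 40, left associativity).
Definition mo (a : expo) (k : K) : laurent := [:: (a, k)].

Lemma mo_mul a b k l : mo a k ** mo b l = mo (a + b) (k * l).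
Proof. by []. Qed.

Lemma lpmulAC s t u : s ** t ** u =~ s ** u ** t.
Proof. by rewrite -lpmulA (lpmulC t u) lpmulA. Qed.

Lemma lpmulCA s t u : s ** (t ** u) =~ t ** (s ** u).
Proof. by rewrite lpmulA (lpmulC s t) -lpmulA. Qed.

Lemma lpmulACA s t u v : s ** t ** (u ** v) =~ s ** u ** (t ** v).
Proof. by rewrite -!lpmulA (lpmulCA t u v). Qed.

Lemma nz_mo a k : k != 0 -> ~ lpzero (mo a k).
Proof. by move=> nk /(_ a); rewrite coef_mon eqxx; apply/eqP. Qed.

Lemma nz_one : ~ lpzero (lpone P K).
Proof.
have -> : lpone P K = mo 0 1 by [].
exact: nz_mo (oner_neq0 K).
Qed.

Lemma supp_nil (A : pred expo) : supported_in A ([::] : laurent).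
Proof. by move=> e; rewrite coef_nil eqxx. Qed.

Lemma supp_mo (A : pred expo) a k : A a -> supported_in A (mo a k).
Proof. by move=> Aa e; rewrite coef_mon; case: (a =P e) => [<- //|_]; rewrite eqxx. Qed.

Lemma supp_add (A : pred expo) s t :
  supported_in A s -> supported_in A t -> supported_in A (lpadd s t).
Proof.
move=> hs ht e; rewrite /lpadd coef_cat.
case: (coef s e =P 0) => [->|/eqP/hs //]; rewrite add0r; exact: ht.
Qed.

Lemma supp_lpeq (A : pred expo) s t : s =~ t -> supported_in A s -> supported_in A t.
Proof. by move=> h hs e; rewrite -h; apply: hs. Qed.

Lemma supp_mul (A B X : pred expo) s t :
  supported_in A s -> supported_in B t ->
  (forall a b, A a -> B b -> X (a + b)) -> supported_in X (s ** t).
Proof.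
move=> hs ht hX e; apply: contraR => nX.
rewrite coef_lpmul2.
have -> : \sum_(p <- s) \sum_(q <- t) (if p.1 + q.1 == e then p.2 * q.2 else 0)
   = \sum_(p <- s) \sum_(q <- t) (if p.1 + q.1 == e then 1 else 0) * (p.2 * q.2).
  by apply: eq_bigr => p _; apply: eq_bigr => q _; case: ifP; rewrite ?mul1r ?mul0r.
rewrite (group_sum2 (fun x y => if x + y == e then 1 else 0) (Es := undup (unzip1 s))
   (Et := undup (unzip1 t))) ?undup_uniq //; last 2 first.
- by move=> x; rewrite mem_undup.
- by move=> x; rewrite mem_undup.
rewrite big1 // => x _; rewrite big1 // => y _.
case: ifP => [/eqP exy|]; last by rewrite mul0r.
case: (coef s x =P 0) => [->|/eqP /hs Ax]; first by rewrite mul0r mulr0.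
case: (coef t y =P 0) => [->|/eqP /ht By]; first by rewrite !mulr0.
by move: nX; rewrite -exy (hX _ _ Ax By).
Qed.

Lemma inR_mo a k : S 0 a -> inRpoly (mo a k).
Proof. exact: supp_mo. Qed.

Lemma lpmul_nil s : lpmul [::] s = ([::] : laurent).
Proof. by []. Qed.


Lemma span_mo (W : pred expo) a U k : W a -> S 0 U -> S 0 (a + U) ->
  monspan W (mo (a + U) k, mo U 1).
Proof.
move=> Wa SU SaU; split.
  split; first exact: inR_mo. split; first exact: inR_mo. exact: nz_mo (oner_neq0 K).
exists (mo a k); split; first exact: supp_mo.
by rewrite /= mo_mul mulr1.
Qed.

Lemma colon_sub (I : fracideal P K) (X B : pred expo) :
  (forall q, I q -> monspan X q) ->
  (forall b x, B b -> X x -> S 0 (b + x)) ->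
  forall q, monspan B q -> colon I q.
Proof.
move=> hI hBX q [vq [c [sc hc]]]; split => // i /hI [vi [d [sd hd]]].
exists (c ** d); split; first exact: supp_mul sc sd hBX.
rewrite /fmul /= hc hd; exact: lpmulACA.
Qed.

Lemma colon_sup (I : fracideal P K) (W B : pred expo) :
  (exists a0, W a0) ->
  (forall a U, W a -> S 0 U -> S 0 (a + U) -> I (mo (a + U) 1, mo U 1)) ->
  (forall a : expo, exists U : expo, S 0 U /\ S 0 (a + U)) ->
  (forall e, (forall a, W a -> S 0 (e + a)) -> B e) ->
  forall q, colon I q -> monspan B q.
Proof.
move=> [a0 Wa0] hI hU hB q [vq hq]; split => //.
have nz2 : ~ lpzero q.2 by case: vq => _ [].
have [U0 [SU0 SaU0]] := hU a0.
have [r [_ hr]] := hq _ (hI _ _ Wa0 SU0 SaU0).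
rewrite /fmul /= in hr.
pose c := r ** mo (- a0) 1.
have hc : q.1 =~ c ** q.2.
  apply: (lpcancel (t := mo (a0 + U0) 1)); first exact: nz_mo (oner_neq0 K).
  rewrite hr /c -!lpmulA (lpmulCA (mo (- a0) 1)) mo_mul.
  have -> : (-a0 + (a0 + U0)) = U0 by rewrite addKr.
  by rewrite mulr1.
exists c; split => //.
move=> e ce; apply: hB => a Wa.
have [U [SU SaU]] := hU a.
have [ra [Sra hra]] := hq _ (hI _ _ Wa SU SaU).
rewrite /fmul /= in hra.
have hca : c ** mo a 1 =~ ra.
  apply: (lpcancel (t := q.2 ** mo U 1)).
    exact: lpmul_nz nz2 (nz_mo (oner_neq0 K)).
  rewrite -hra hc lpmulACA mo_mul mulr1; reflexivity.
apply: Sra; rewrite -hca lpmul_shift addrK; exact: ce.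
Qed.


Definition fsum (s : seq (frac * frac)) : frac :=
  foldr (@fadd _ P K) (Defs.fzero P K) [seq fmul p.1 p.2 | p <- s].

Lemma fsum_cons (p : frac * frac) (s : seq (frac * frac)) : fsum (p :: s) = fadd (fmul p.1 p.2) (fsum s).
Proof. by []. Qed.

Lemma fsum_inv (A B X : pred expo) (s : seq (frac * frac)) :
  (forall a b, A a -> B b -> X (a + b)) ->
  (forall p, p \in s -> monspan A p.1 /\ monspan B p.2) ->
  exists c, supported_in X c /\ (fsum s).1 =~ c ** (fsum s).2 /\ ~ lpzero (fsum s).2.
Proof.
move=> hX; elim: s => [|p s IH] hs.
  exists [::]; split; first exact: supp_nil.
  by split; [move=> e | exact: nz_one].
have hs' : forall p', p' \in s -> monspan A p'.1 /\ monspan B p'.2.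
  by move=> p' ps; apply: hs; rewrite in_cons ps orbT.
have [c [sc [hc nc]]] := IH hs'.
have [[vp1 [c1 [s1 h1]]] [vp2 [c2 [s2 h2]]]] := hs p (mem_head _ _).
have n1 : ~ lpzero p.1.2 by case: vp1 => _ [].
have n2 : ~ lpzero p.2.2 by case: vp2 => _ [].
rewrite fsum_cons; exists (lpadd (c1 ** c2) c); split.
  exact: supp_add (supp_mul s1 s2 hX) sc.
split; last exact: lpmul_nz (lpmul_nz n1 n2) nc.
rewrite /fadd /fmul /= lpmulDl; apply: lpeq_add.
  by rewrite h1 h2 lpmulACA; symmetry; exact: lpmulA.
by rewrite hc -lpmulA (lpmulC (fsum s).2) lpmulA.
Qed.

Lemma prod_sub (A B X : pred expo) :
  (forall a b, A a -> B b -> X (a + b)) ->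
  forall q, prodI (@monspan _ P K A) (@monspan _ P K B) q -> monspan X q.
Proof.
move=> hX q [vq [s [hs he]]]; split => //.
have [c [sc [hc nc]]] := fsum_inv hX hs.
exists c; split => //.
apply: (lpcancel (t := (fsum s).2)) => //.
have he' : q.1 ** (fsum s).2 =~ (fsum s).1 ** q.2 by exact: he.
by rewrite he' hc lpmulAC.
Qed.

Lemma fsum_build (A B X : pred expo) :
  (forall x, X x -> exists a b, A a /\ B b /\ x = a + b) ->
  (forall a : expo, exists U : expo, S 0 U /\ S 0 (a + U)) ->
  forall l : laurent, all (fun p => X p.1) l ->
  exists s : seq (frac * frac), (forall p, p \in s -> monspan A p.1 /\ monspan B p.2) /\
            (fsum s).1 =~ l ** (fsum s).2.
Proof.
move=> hd hU; elim => [|[x k] l IH] /=.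
  by move=> _; exists [::]; split.
case/andP => Xx /IH [s [hs he]].
have [a [b [Aa [Bb ->]]]] := hd x Xx.
have [Ua [SUa SaUa]] := hU a.
have [Ub [SUb SbUb]] := hU b.
exists (((mo (a + Ua) k, mo Ua 1), (mo (b + Ub) 1, mo Ub 1)) :: s); split.
  move=> p; rewrite in_cons => /orP[/eqP -> | /hs //].
  split; apply: span_mo => //.
rewrite fsum_cons /fadd /fmul; cbn [fst snd]; rewrite !mo_mul !mulr1.
have -> : (a + b, k) :: l = lpadd (mo (a + b) k) l by [].
rewrite lpmulDl. apply: lpeq_add.
  rewrite lpmulA mo_mul mulr1.
  have -> : a + b + (Ua + Ub) = a + Ua + (b + Ub) by rewrite addrACA.
  reflexivity.
rewrite he -lpmulA (lpmulC (fsum s).2). reflexivity.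
Qed.

Lemma prod_sup (A B X : pred expo) :
  (forall x, X x -> exists a b, A a /\ B b /\ x = a + b) ->
  (forall a : expo, exists U : expo, S 0 U /\ S 0 (a + U)) ->
  forall q, monspan X q -> prodI (@monspan _ P K A) (@monspan _ P K B) q.
Proof.
move=> hd hU q [vq [c [sc hc]]]; split => //.
pose c' := [seq p <- c | X p.1].
have cc : c =~ c'.
  move=> e; rewrite /c' /coef big_filter_cond.
  case Xe: (X e).
    by apply: eq_bigl => p; case: eqP => [->|]; rewrite ?Xe ?andbF.
  have -> : \sum_(p <- c | p.1 == e) p.2 = 0.
    by apply/eqP; apply: contraFT Xe => /sc.
  by rewrite big_pred0 // => p; case: eqP => [->|]; rewrite ?Xe ?andbF.
have [s [hs he]] := fsum_build hd hU (filter_all (fun p => X p.1) c).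
exists s; split => //.
have -> : fequiv q (foldr (@fadd _ P K) (Defs.fzero P K) [seq fmul p.1 p.2 | p <- s])
   = (q.1 ** (fsum s).2 =~ (fsum s).1 ** q.2) by [].
by rewrite he hc -/c' -cc lpmulAC.
Qed.

Lemma fieq_refl (I : fracideal P K) : fieq I I.
Proof. by []. Qed.
Lemma fieq_sym (I J : fracideal P K) : fieq I J -> fieq J I.
Proof. by move=> h q; split => /h. Qed.
Lemma fieq_trans (I J L : fracideal P K) : fieq I J -> fieq J L -> fieq I L.
Proof. by move=> h1 h2 q; split => [/h1/h2|/h2/h1]. Qed.

Lemma colon_ext (I J : fracideal P K) : fieq I J -> fieq (colon I) (colon J).
Proof.
move=> h q; split => -[v hq]; split => // i hi; apply: hq; exact/h.
Qed.

Lemma prodI_ext (I I' J J' : fracideal P K) :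
  fieq I I' -> fieq J J' -> fieq (prodI I J) (prodI I' J').
Proof.
move=> h1 h2 q; split => -[v [s [hs he]]]; split => //; exists s; split => //.
  by move=> p /hs [/h1 ? /h2 ?].
by move=> p /hs [/h1 ? /h2 ?].
Qed.

End Frac.



Section Comb.
Context {disp : Order.disp_t} {P : finPOrderType disp}.
Local Notation expo := (expo P).
Implicit Types (xi a b : expo) (C D : {set P}).

Lemma ar1 (Sg aN nN N : int) : nN + Sg <= N -> - aN <= nN -> Sg <= aN + N.
Proof. lia. Qed.

Lemma ar2 (k : int) (c p : nat) : (c <= p)%N -> k *+ c + k <= `|k| * (p.+1)%:Z.
Proof. move=> h; nia. Qed.

Lemma SP k xi : reflect ((forall x, k <= xi (Some x)) /\
   (forall C, is_max_chain C -> \sum_(x in C) xi (Some x) + k <= xi None)) (S k xi).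
Proof.
apply: (iffP andP) => [[/forallP h1 /forallP h2]|[h1 h2]]; split.
- exact: h1.
- by move=> C hC; move/implyP: (h2 C); apply.
- by apply/forallP.
- by apply/forallP => C; apply/implyP; apply: h2.
Qed.

Lemma S_add j k a b : S j a -> S k b -> S (j + k) (a + b).
Proof.
move=> /SP[a1 a2] /SP[b1 b2]; apply/SP; split.
  by move=> x; rewrite ffunE lerD.
move=> C hC; rewrite ffunE.
under eq_bigr => x _ do rewrite ffunE.
rewrite big_split /= addrACA; exact: lerD (a2 _ hC) (b2 _ hC).
Qed.

Lemma sum_abs_ge (F : P -> int) (A : {set P}) :
  \sum_(x in A) F x <= \sum_(x : P) `|F x|.
Proof.
apply: (@le_trans _ _ (\sum_(x in A) `|F x|)); first by apply: ler_sum => x _; exact: ler_norm.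
rewrite [X in _ <= X](bigID (fun x => x \in A)) /= lerDl.
by apply: sumr_ge0.
Qed.

Lemma term_le_sum (F : P -> int) x : `|F x| <= \sum_(y : P) `|F y|.
Proof. by rewrite (bigD1 x) //= lerDl sumr_ge0. Qed.

Definition Ubig (N : int) : expo :=
  [ffun z => if z is Some _ then N else N * (#|P|.+1)%:Z].

Lemma Ubig_S a (N : int) : `|a None| + \sum_(x : P) `|a (Some x)| <= N -> S 0 (a + Ubig N).
Proof.
move=> hN; apply/SP; split.
  move=> x; rewrite !ffunE /=.
  have := term_le_sum (fun y => a (Some y)) x; have := ler_norm (- a (Some x)).
  rewrite normrN; lia.
move=> C hC; rewrite addr0 !ffunE /=.
under eq_bigr => x _ do rewrite !ffunE /=.
rewrite big_split /= sumr_const.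
have := sum_abs_ge (fun y => a (Some y)) C; have := ler_norm (- a None).
have := max_card C.
have : 0 <= \sum_(x : P) `|a (Some x)| by apply: sumr_ge0.
rewrite normrN /= => h1 h2 h3 h4.
set Sg := \sum_(x : P) `|a (Some x)| in hN h1 h4.
set SC := \sum_(x in C) a (Some x) in h4 *. 
have N0 : 0 <= N by move: hN h1; have := normr_ge0 (a None); lia.
have h5 : N * #|C|%:Z <= N * #|P|%:Z.
  by apply: ler_wpM2l => //; rewrite lez_nat.
have e1 : N *+ #|C| = N * #|C|%:Z by rewrite -mulr_natr natz.
have e2 : N * (#|P|.+1)%:Z = N * #|P|%:Z + N by rewrite -addn1 PoszD mulrDr mulr1.
rewrite e1 e2; apply: le_trans (lerD h4 h5) _.
rewrite addrC addrCA lerD2l; exact: ar1 hN h3.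
Qed.

Lemma Ubig_ex a : exists U, S 0 U /\ S 0 (a + U).
Proof.
pose N := `|a None| + \sum_(x : P) `|a (Some x)|.
exists (Ubig N); split; last exact: Ubig_S.
have -> : Ubig N = 0 + Ubig N by rewrite add0r.
have z0 : forall z, (0 : expo) z = 0 by move=> z; rewrite ffunE.
apply: Ubig_S; rewrite z0 normr0 add0r.
under eq_bigr => x _ do rewrite z0 normr0.
by rewrite big1 // /N addr_ge0 // sumr_ge0.
Qed.

Definition W0 (k : int) : expo :=
  [ffun z => if z is Some _ then k else `|k| * (#|P|.+1)%:Z].

Lemma W0_S k : S k (W0 k).
Proof.
apply/SP; split; first by move=> x; rewrite ffunE.
move=> C hC; rewrite ffunE; under eq_bigr => x _ do rewrite ffunE.
rewrite sumr_const; exact: ar2 (max_card C).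
Qed.


Lemma chainP C : reflect (forall x y, x \in C -> y \in C -> (x >=< y)%O) (is_chain C).
Proof.
apply: (iffP forall_inP) => [h x y xC yC | h x xC].
  by move/forall_inP: (h x xC); apply.
by apply/forall_inP => y yC; apply: h.
Qed.

Lemma mc_chain C : is_max_chain C -> is_chain C.
Proof. by case/andP. Qed.

Lemma mc_max C D : is_max_chain C -> is_chain D -> C \subset D -> D = C.
Proof.
case/andP => _ /forallP h cD sCD; apply/eqP; move/implyP: (h D); apply.
by rewrite cD sCD.
Qed.

Lemma mc_cmp C x y : is_max_chain C -> x \in C -> y \in C -> (x >=< y)%O.
Proof. by move/mc_chain/chainP; apply. Qed.

Lemma mc_ins C z : is_max_chain C -> (forall y, y \in C -> (z >=< y)%O) -> z \in C.
Proof.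
move=> hC hz.
have cD : is_chain (z |: C).
  apply/chainP => x y; rewrite !in_setU1 => /orP[/eqP->|xC] /orP[/eqP->|yC].
  - exact: comparablexx.
  - exact: hz.
  - by rewrite comparable_sym; apply: hz.
  - exact: mc_cmp hC xC yC.
have e := mc_max hC cD (subsetUr _ _).
by rewrite -e setU11.
Qed.

Lemma ar3i (k d c i p : int) : 0 <= d <= p -> 0 <= c <= p -> 0 <= i -> i + 1 <= c ->
  k * d + `|k| * p * i <= k * c + `|k| * p * c.
Proof.
move=> /andP[d0 dp] /andP[c0 cp] i0 ic.
have h1 : 0 <= `|k| * p * (c - 1 - i) by rewrite !mulr_ge0 // ?subr_ge0 //; lia.
have h2 : k * d - k * c <= `|k| * p.
  case: (lerP 0 k) => hk.
    rewrite ger0_norm //; nia.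
  rewrite ltr0_norm //; nia.
lia.
Qed.
Lemma mulrnz (x : int) (n : nat) : x *+ n = x * n%:Z.
Proof. by rewrite -mulr_natr natz. Qed.

Lemma ar3 (k : int) (d c i p : nat) : (d <= p)%N -> (c <= p)%N -> (i < c)%N ->
  k *+ d + `|k| *+ p *+ i <= k *+ c + `|k| *+ p *+ c.
Proof.
move=> h1 h2 h3; rewrite !mulrnz.
apply: ar3i; lia.
Qed.


Lemma ar4 (a k : int) : 0 <= a + k -> - k <= a.
Proof. lia. Qed.

Lemma ar5 (a b s k : int) : a + s <= b + (s + k) -> a + - k <= b.
Proof. lia. Qed.

Definition WC (k : int) (C : {set P}) : expo :=
  [ffun z => match z with
   | Some y => k + (if y \in C then `|k| *+ #|P| else 0)
   | None => \sum_(y in C) (k + (if y \in C then `|k| *+ #|P| else 0)) + k end].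

Lemma sum_WC (k : int) C D :
  \sum_(y in D) (k + (if y \in C then `|k| *+ #|P| else 0)) =
  k *+ #|D| + `|k| *+ #|P| *+ #|D :&: C|.
Proof.
rewrite big_split /= sumr_const; congr (_ + _).
rewrite -big_mkcondr /= (eq_bigl (fun y => y \in D :&: C)) ?sumr_const //.
by move=> y; rewrite in_setI.
Qed.

Lemma WC_S k C : is_max_chain C -> S k (WC k C).
Proof.
move=> hC; apply/SP; split.
  by move=> x; rewrite ffunE lerDl; case: ifP => // _; rewrite mulrn_wge0.
move=> D hD; rewrite ffunE; under eq_bigr => x _ do rewrite ffunE.
rewrite lerD2r.
case: (D =P C) => [->//|nDC].
have nsub : ~~ (C \subset D).
  by apply/negP => /(mc_max hC (mc_chain hD)).
rewrite !sum_WC setIid.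
apply: ar3; try exact: max_card.
apply: proper_card; rewrite properE subsetIr /= subsetI subxx andbT.
exact: nsub.
Qed.

Lemma S_dual k e : (forall a, S k a -> S 0 (e + a)) -> S (- k) e.
Proof.
move=> h; apply/SP; split.
  move=> x; move/SP: (h _ (W0_S k)) => [h1 _]; move: (h1 x); rewrite !ffunE /=.
  exact: ar4.
move=> C hC; move/SP: (h _ (WC_S k hC)) => [_ h2]; move: (h2 C hC).
rewrite addr0 !ffunE /=; under eq_bigr => x _ do rewrite !ffunE /=.
rewrite big_split /=; exact: ar5.
Qed.

Lemma S_nonempty k : exists a, S k a.
Proof. by exists (W0 k); apply: W0_S. Qed.

End Comb.



Section Decomp.
Context {disp : Order.disp_t} {P : finPOrderType disp}.
Local Notation expo := (expo P).
Implicit Types (C D : {set P}).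

Lemma cmp_lt (x y : P) : (x >=< y)%O -> ~~ (y <= x)%O -> (x < y)%O.
Proof.
move=> /orP[xy|yx] nyx; last by rewrite yx in nyx.
rewrite lt_neqAle xy andbT; apply: contraNneq nyx => ->; exact: lexx.
Qed.

Lemma exists_argmax (A : {set P}) (F : P -> nat) : A != set0 ->
  exists2 t, t \in A & forall y, y \in A -> (F y <= F t)%N.
Proof.
case/set0Pn => y0 y0A.
case: (@arg_maxnP _ y0 (mem A) F y0A) => t tA ht.
by exists t.
Qed.

Lemma ar7 (N q1 q2 t1 t2 : int) : 0 < N -> q1*N <= t1 -> t1 < q1*N + N ->
  q2*N <= t2 -> t2 < q2*N + N -> t1 <= t2 -> q1 <= q2.
Proof. move=> *; nia. Qed.
Lemma ar8 (N q1 q2 t1 t2 : int) : 0 < N -> q1*N <= t1 -> t1 < q1*N + N ->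
  q2*N <= t2 -> t2 < q2*N + N -> t1 <= t2 -> t1 - q1 <= t2 - q2.
Proof. move=> *; nia. Qed.
Lemma pt_pos (N d s q1 q0 : int) : 0 < N -> N <= d -> q1*N <= s + d -> s + d < q1*N + N ->
   q0 * N <= s -> s < q0*N + N -> 1 <= q1 - q0 /\ N - 1 <= d - (q1 - q0).
Proof. move=> *; split; nia. Qed.
Lemma pt_neg (N d s q1 q0 : int) : 0 < N -> - N <= d -> q1*N <= s + d -> s + d < q1*N + N ->
   q0 * N <= s -> s < q0*N + N -> -1 <= q1 - q0 /\ - N - -1 <= d - (q1 - q0).
Proof. move=> *; split; nia. Qed.
Lemma pt_gen (N k e d s q1 q0 : int) : 0 < N -> (k = N /\ e = 1) \/ (k = - N /\ e = -1) ->
   k <= d -> q1*N <= s + d -> s + d < q1*N + N ->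
   q0 * N <= s -> s < q0*N + N -> e <= q1 - q0 /\ k - e <= d - (q1 - q0).
Proof. by move=> N0 [[-> ->]|[-> ->]]; [exact: pt_pos | exact: pt_neg]. Qed.
Lemma divfacts (t N : int) : 0 < N -> (t %/ N)%Z * N <= t /\ t < (t %/ N)%Z * N + N.
Proof.
move=> N0; have e := divz_eq t N; have h1 := modz_ge0 t (lt0r_neq0 N0).
have h2 := ltz_mod t (lt0r_neq0 N0); rewrite gtr0_norm // in h2; lia.
Qed.
Lemma ar10 (w G p1 p0 : int) : w - (p1 - p0) = (G - p1) - ((G - w) - p0).
Proof. lia. Qed.
Lemma ar11 (S' X k e p p0 : int) : S' <= (X - k - p) - (0 - p0) ->
  S' + (k - e) <= X - (p - p0 + e).
Proof. lia. Qed.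

Definition phi (N : int) (t : int) := (t %/ N)%Z.

Lemma phi_mono N : 0 < N -> {homo phi N : a b / a <= b}.
Proof.
move=> N0 a b ab; have [h1 h2] := divfacts a N0; have [h3 h4] := divfacts b N0.
exact: ar7 N0 h1 h2 h3 h4 ab.
Qed.

Lemma psi_mono N : 0 < N -> {homo (fun t => t - phi N t) : a b / a <= b}.
Proof.
move=> N0 a b ab; have [h1 h2] := divfacts a N0; have [h3 h4] := divfacts b N0.
exact: ar8 N0 h1 h2 h3 h4 ab.
Qed.

Context (xi : expo).
Local Notation w y := (xi (Some y)).

Definition pre C (x : P) := \sum_(y in C | (y < x)%O) w y.
Definition m0 := - \sum_(y : P) `|w y|.
Definition G (x : P) := \big[Num.max/m0]_(C : {set P} | is_max_chain C && (x \in C))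
   (pre C x + w x).

Lemma m0_le (Q : pred P) : m0 <= \sum_(y | Q y) w y.
Proof.
rewrite /m0 (bigID Q) /= opprD.
apply: (@le_trans _ _ (- \sum_(y | Q y) `|w y|)).
  by rewrite gerDl oppr_le0 sumr_ge0.
rewrite -sumrN; apply: ler_sum => y _.
by have := ler_norm (- w y); rewrite normrN lerNl.
Qed.

Lemma G_ge C x : is_max_chain C -> x \in C -> pre C x + w x <= G x.
Proof.
move=> hC xC; rewrite /G (bigD1 C) /=; last by rewrite hC xC.
by rewrite le_max lexx.
Qed.

Lemma G_le x b : m0 <= b ->
  (forall C, is_max_chain C -> x \in C -> pre C x + w x <= b) -> G x <= b.
Proof.
move=> h0 h; rewrite /G; apply: (big_ind (fun v => v <= b)) => //.
  by move=> u v hu hv; rewrite ge_max hu hv.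
by move=> C /andP[hC xC]; apply: h.
Qed.


Lemma splice C C' (x x' : P) :
  is_max_chain C -> is_max_chain C' -> x \in C -> x' \in C -> (x < x')%O ->
  (forall z, z \in C -> ~~ ((x < z)%O && (z < x')%O)) -> x \in C' ->
  exists C2, [/\ is_max_chain C2, x' \in C2 & pre C2 x' = pre C' x + w x].
Proof.
move=> hC hC' xC x'C xx' nb xC'.
pose C2 := [set y in C' | (y <= x)%O] :|: [set y in C | (x' <= y)%O].
have inC2 y : (y \in C2) = ((y \in C') && (y <= x)%O) || ((y \in C) && (x' <= y)%O).
  by rewrite !inE.
have x'C2 : x' \in C2 by rewrite inC2 x'C lexx orbT.
have xC2 : x \in C2 by rewrite inC2 xC' lexx.
have cC2 : is_chain C2.
  apply/chainP => u v; rewrite !inC2.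
  move=> /orP[/andP[uC ux]|/andP[uC xu]] /orP[/andP[vC vx]|/andP[vC xv]].
  - exact: mc_cmp hC' uC vC.
  - apply/orP; left; apply: le_trans ux _; apply: le_trans (ltW xx') xv.
  - apply/orP; right; apply: le_trans vx _; apply: le_trans (ltW xx') xu.
  - exact: mc_cmp hC uC vC.
exists C2; split => //.
- apply/andP; split => //; apply/forallP => D; apply/implyP => /andP[cD sub].
  rewrite eqEsubset sub andbT; apply/subsetP => z zD.
  have cmpD u : u \in C2 -> (z >=< u)%O.
    move=> uC2; move/chainP: cD; apply => //; exact: (subsetP sub).
  have cx := cmpD _ xC2.
  have cx' := cmpD _ x'C2.
  case zx: (z <= x)%O.
    rewrite inC2 zx andbT; apply/orP; left; apply: (mc_ins hC') => y yC'.
    case yx: (y <= x)%O.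
      by apply: cmpD; rewrite inC2 yC' yx.
    have xy : (x < y)%O by apply: cmp_lt; [exact: mc_cmp hC' xC' yC' | rewrite yx].
    by apply/orP; left; apply: le_trans zx (ltW xy).
  case x'z: (x' <= z)%O.
    rewrite inC2 x'z andbT; apply/orP; right; apply: (mc_ins hC) => y yC.
    case x'y: (x' <= y)%O.
      by apply: cmpD; rewrite inC2 yC x'y orbT.
    have yx' : (y < x')%O by apply: cmp_lt; [exact: mc_cmp hC yC x'C | rewrite x'y].
    by apply/orP; right; apply: le_trans (ltW yx') x'z.
  exfalso.
  have xz : (x < z)%O by apply: cmp_lt; [rewrite comparable_sym | rewrite zx].
  have zx' : (z < x')%O by apply: cmp_lt; [exact: cx' | rewrite x'z].
  have zC : z \in C.
    apply: (mc_ins hC) => y yC.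
    case yx: (y <= x)%O; first by apply/orP; right; apply: le_trans yx (ltW xz).
    case x'y: (x' <= y)%O; first by apply/orP; left; apply: le_trans (ltW zx') x'y.
    have xy : (x < y)%O by apply: cmp_lt; [exact: mc_cmp hC xC yC | rewrite yx].
    have yx' : (y < x')%O by apply: cmp_lt; [exact: mc_cmp hC yC x'C | rewrite x'y].
    by move: (nb y yC); rewrite xy yx'.
  by move: (nb z zC); rewrite xz zx'.
- rewrite /pre (eq_bigl (fun y => (y \in C') && (y <= x)%O)); last first.
    move=> y; rewrite inC2; apply/idP/idP.
      case/andP => /orP[/andP[-> -> //]|/andP[_ x'y]] yx'.
      by move: (le_lt_trans x'y yx'); rewrite ltxx.
    case/andP => yC' yx; rewrite yC' yx /=; exact: le_lt_trans yx xx'.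
  rewrite (bigD1 x) /=; last by rewrite xC' lexx.
  rewrite addrC; congr (_ + _); apply: eq_bigl => y.
  rewrite lt_neqAle; case: (y \in C'); case: (y <= x)%O; case: (y != x) => //.
Qed.


Definition cnt C (t : P) := #|[set y in C | (y < t)%O]|.

Lemma cnt_lt C (a b : P) : a \in C -> (a < b)%O -> (cnt C a < cnt C b)%N.
Proof.
move=> aC ab; apply: proper_card; rewrite properE; apply/andP; split.
  apply/subsetP => y; rewrite !inE => /andP[-> ya]; exact: lt_trans ya ab.
apply/subsetPn; exists a; first by rewrite inE aC ab.
by rewrite inE ltxx andbF.
Qed.

Lemma Gstep C (t' t : P) : is_max_chain C -> t' \in C -> t \in C -> (t' < t)%O ->
  (forall z, z \in C -> ~~ ((t' < z)%O && (z < t)%O)) -> G t' <= G t - w t.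
Proof.
move=> hC t'C tC tt' nb; apply: G_le.
  have h2 := G_ge hC tC.
  have h1 := m0_le (fun y => (y \in C) && (y < t)%O).
  rewrite lerBrDr; apply: le_trans h2; rewrite lerD2r; exact: h1.
move=> C' hC' t'C'.
have [C2 [hC2 tC2 e]] := splice hC hC' t'C tC tt' nb t'C'.
rewrite -e lerBrDr; exact: G_ge hC2 tC2.
Qed.

Lemma ar9 (A B X Y Z : int) : X <= Y - Z -> Y <= B -> A - B + X <= A - Z.
Proof. lia. Qed.

Definition T (f : int -> int) C (t : P) :=
  \sum_(y in C | (y <= t)%O) (f (G y) - f (G y - w y)).

Lemma tele (f : int -> int) C : {homo f : a b / a <= b} -> is_max_chain C ->
  forall t, t \in C -> T f C t <= f (G t) - f 0.
Proof.
move=> fm hC.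
suff H : forall N t, t \in C -> (cnt C t < N)%N -> T f C t <= f (G t) - f 0.
  by move=> t tC; apply: (H (cnt C t).+1).
elim=> // N IH t tC hN.
case E: (cnt C t == 0)%N.
  have nolt : forall y, y \in C -> ~~ (y < t)%O.
    move=> y yC; apply/negP => yt.
    have : y \in [set y in C | (y < t)%O] by rewrite inE yC yt.
    by move/eqP: E => /cards0_eq ->; rewrite inE.
  rewrite /T (big_pred1 t); last first.
    move=> y /=; rewrite le_eqVlt; have [->|ny] := eqVneq y t; first by rewrite ?eqxx tC.
    rewrite /=; case yC: (y \in C) => //=; exact: negbTE (nolt _ yC).
  rewrite lerD2l lerN2; apply: fm.
  have p0 : pre C t = 0.
    rewrite /pre big_pred0 // => y; case yC: (y \in C) => //=; exact: negbTE (nolt _ yC).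
  have := G_ge hC tC; rewrite p0 add0r subr_ge0; exact.
have ne : [set y in C | (y < t)%O] != set0 by rewrite -cards_eq0; exact: negbT E.
have [t' t'A ht'] := exists_argmax (cnt C) ne.
move: (t'A); rewrite inE => /andP[t'C t't].
have nb : forall z, z \in C -> ~~ ((t' < z)%O && (z < t)%O).
  move=> z zC; apply/negP => /andP[t'z zt].
  have zA : z \in [set y in C | (y < t)%O] by rewrite inE zC zt.
  by move: (ht' z zA); rewrite leqNgt (cnt_lt t'C t'z).
rewrite /T (bigD1 t) /=; last by rewrite tC lexx.
rewrite (eq_bigl (fun y => (y \in C) && (y <= t')%O)); last first.
  move=> y; apply/idP/idP.
    case/andP => /andP[yC yt] yn.
    have yt2 : (y < t)%O by rewrite lt_neqAle yn yt.
    rewrite yC /=; case yt': (y <= t')%O => //.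
    have t'y : (t' < y)%O by apply: cmp_lt; [exact: mc_cmp hC t'C yC | rewrite yt'].
    by move: (nb y yC); rewrite t'y yt2.
  case/andP => yC yt'; rewrite yC /= (le_trans yt' (ltW t't)) /=.
  apply/eqP => yt; rewrite yt in yt'; by rewrite (lt_geF t't) in yt'.
have hc : (cnt C t' < N)%N by have := cnt_lt t'C t't; lia.
have IHt := IH t' t'C hc.
have Gs := Gstep hC t'C tC t't nb.
apply: ar9 IHt (fm _ _ Gs).
Qed.

Lemma top_bound (f : int -> int) (k : int) C : {homo f : a b / a <= b} ->
  S k xi -> is_max_chain C ->
  \sum_(y in C) (f (G y) - f (G y - w y)) <= f (xi None - k) - f 0.
Proof.
move=> fm /SP[_ hS] hC.
case: (set_0Vmem C) => [C0|[t0 t0C]].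
  rewrite C0 big_set0 subr_ge0; apply: fm.
  have := hS _ hC; rewrite C0 big_set0 add0r subr_ge0; exact.
have ne : C != set0 by apply/set0Pn; exists t0.
have [t tC ht] := exists_argmax (cnt C) ne.
have all_le : forall y, y \in C -> (y <= t)%O.
  move=> y yC; case yt: (y <= t)%O => //.
  have ty : (t < y)%O by apply: cmp_lt; [exact: mc_cmp hC tC yC | rewrite yt].
  by move: (ht y yC); rewrite leqNgt (cnt_lt tC ty).
rewrite (eq_bigl (fun y => (y \in C) && (y <= t)%O)); last first.
  by move=> y; case yC: (y \in C) => //=; rewrite all_le.
apply: le_trans (tele fm hC tC) _; rewrite lerD2r; apply: fm.
have tmax : forall z, ~~ (t < z)%O.
  move=> z; apply/negP => tz.
  have zC : z \in C.
    apply: (mc_ins hC) => y yC; apply/orP; right; exact: le_trans (all_le _ yC) (ltW tz).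
  by move: (all_le _ zC); rewrite (lt_geF tz).
apply: G_le.
  apply: le_trans (m0_le (fun y => y \in C)) _; rewrite lerBrDr; exact: hS.
move=> C' hC' tC'.
have -> : pre C' t + w t = \sum_(y in C') w y.
  rewrite [in RHS](bigD1 t) //= addrC; congr (_ + _); apply: eq_bigl => y.
  case yC: (y \in C') => //=.
  rewrite lt_neqAle; case yt: (y <= t)%O; rewrite ?andbT ?andbF //.
  have ty : (t < y)%O by apply: cmp_lt; [exact: mc_cmp hC' tC' yC | rewrite yt].
  by move: (tmax y); rewrite ty.
rewrite lerBrDr; exact: hS.
Qed.


Lemma decomp (n : nat) (k e : int) : (0 < n)%N ->
  (k = n%:Z /\ e = 1) \/ (k = - n%:Z /\ e = -1) ->
  S k xi -> exists eta, S e eta /\ S (k - e) (xi - eta).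
Proof.
move=> n0 hke hS.
have N0 : 0 < n%:Z by rewrite ltz_nat.
pose a y := phi n%:Z (G y) - phi n%:Z (G y - w y).
exists [ffun z => match z with
  | Some y => a y | None => phi n%:Z (xi None - k) - phi n%:Z 0 + e end].
have pt : forall y, e <= a y /\ k - e <= w y - a y.
  move=> y; have [h3 h4] := divfacts (G y - w y) N0.
  have [h1 h2] := divfacts (G y - w y + w y) N0.
  have wk : k <= w y by case/SP: hS.
  rewrite /a /phi -{1 3}(subrK (w y) (G y)).
  exact: pt_gen N0 hke wk h1 h2 h3 h4.
split.
  apply/SP; split; first by move=> y; rewrite ffunE; exact: (pt y).1.
  move=> C hC; rewrite ffunE; under eq_bigr => y _ do rewrite ffunE.
  rewrite lerD2r; exact: top_bound (phi_mono N0) hS hC.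
apply/SP; split; first by move=> y; rewrite !ffunE /=; exact: (pt y).2.
move=> C hC; rewrite !ffunE /=; under eq_bigr => y _ do rewrite !ffunE /=.
rewrite (eq_bigr (fun y => (G y - phi n%:Z (G y)) -
   ((G y - w y) - phi n%:Z (G y - w y)))); last by move=> y _; rewrite /a (ar10 _ (G y)).
apply: ar11; exact: top_bound (psi_mono N0) hS hC.
Qed.

End Decomp.



Section Main.
Context {disp : Order.disp_t} {P : finPOrderType disp} {K : fieldType}.
Local Notation expo := (expo P).
Local Notation span A := (@monspan _ P K A).

Lemma colon_S (k : int) : fieq (colon (span (S k))) (span (S (- k))).
Proof.
move=> q; split.
  apply: (colon_sup (W := S k)).
  - exact: S_nonempty.
  - move=> a U Wa SU SaU; exact: span_mo.
  - exact: Ubig_ex.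
  - exact: S_dual.
apply: (colon_sub (X := S k)) => // b x hb hx.
by have := S_add hb hx; rewrite addNr.
Qed.

Lemma prod_S (e j : int) (m : nat) :
  (e = 1 /\ j = m%:Z) \/ (e = -1 /\ j = - m%:Z) ->
  fieq (prodI (span (S e)) (span (S j))) (span (S (e + j))).
Proof.
move=> hej q; split.
  by apply: prod_sub => a b ha hb; exact: S_add.
apply: prod_sup; last exact: Ubig_ex.
move=> x hx.
have hk : (e + j = (m.+1)%:Z /\ e = 1) \/ (e + j = - (m.+1)%:Z /\ e = -1).
  case: hej => [[-> ->]|[-> ->]]; [left | right]; split => //.
  all: try by rewrite -opprD intS.
have [eta [h1 h2]] := decomp (ltn0Sn m) hk hx.
exists eta, (x - eta); split => //; split; last by rewrite addrC subrK.
by move: h2; rewrite (addrC e j) addrK.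
Qed.

Lemma opow_pos n : fieq (opow (span (S 1)) n) (span (S n%:Z)).
Proof.
elim: n => [|n IH]; first exact: fieq_refl.
apply: fieq_trans (prodI_ext (fieq_refl _) IH) _.
have -> : (n.+1)%:Z = 1 + n%:Z by lia.
apply: (prod_S (m := n)); by left.
Qed.

Lemma gpow_pos n : fieq (gpow (span (S 1)) n) (span (S n%:Z)).
Proof.
elim: n => [|n IH]; first exact: fieq_refl.
have h1 : fieq (prodI (span (S 1)) (gpow (span (S 1)) n)) (span (S (n.+1)%:Z)).
  apply: fieq_trans (prodI_ext (fieq_refl _) IH) _.
  have -> : (n.+1)%:Z = 1 + n%:Z by lia.
  apply: (prod_S (m := n)); by left.
apply: fieq_trans (colon_ext (fieq_trans (colon_ext h1) (colon_S _))) _.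
by rewrite -{2}(opprK (n.+1)%:Z); exact: colon_S.
Qed.

Lemma opow_neg n : fieq (opow (colon (span (S 1))) n) (span (S (- n%:Z))).
Proof.
elim: n => [|n IH]; first by rewrite oppr0; exact: fieq_refl.
apply: fieq_trans (prodI_ext (colon_S 1) IH) _.
have -> : - (n.+1)%:Z = -1 + - n%:Z by lia.
apply: (prod_S (m := n)); by right.
Qed.

Lemma gpow_neg n : fieq (gpow (colon (span (S 1))) n) (span (S (- n%:Z))).
Proof.
elim: n => [|n IH]; first by rewrite oppr0; exact: fieq_refl.
have h1 : fieq (prodI (colon (span (S 1))) (gpow (colon (span (S 1))) n))
             (span (S (- (n.+1)%:Z))).
  apply: fieq_trans (prodI_ext (colon_S 1) IH) _.
  have -> : - (n.+1)%:Z = -1 + - n%:Z by lia.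
  apply: (prod_S (m := n)); by right.
apply: fieq_trans (colon_ext (fieq_trans (colon_ext h1) (colon_S _))) _.
by rewrite opprK -{2}(opprK (n.+1)%:Z); exact: colon_S.
Qed.

End Main.

Theorem mainTheorem1 (disp : Order.disp_t) (P : finPOrderType disp)
  (K : fieldType) (n : nat) (hn : (0 < n)%N) :
  (* omega^(n) = omega^n = span of S^(n) *)
  fieq (gpow (@omega disp P K) n) (opow (@omega disp P K) n) /\
  fieq (opow (@omega disp P K) n) (@monspan disp P K (@S disp P n%:Z)) /\
  (* omega^(-n) = (omega^(-1))^n = span of S^(-n) *)
  fieq (gpow (colon (@omega disp P K)) n) (opow (colon (@omega disp P K)) n) /\
  fieq (opow (colon (@omega disp P K)) n) (@monspan disp P K (@S disp P (- n%:Z))).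
Proof.
split; first exact: fieq_trans (gpow_pos n) (fieq_sym (opow_pos n)).
split; first exact: opow_pos.
split; first exact: fieq_trans (gpow_neg n) (fieq_sym (opow_neg n)).
exact: opow_neg.
Qed.
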